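(* Let $G$ be an exceptional graph with root $r$, and let $\{x,y\}=V_2(G)\setminus\{r\}$. Then one of the following holds: (i) $x$ and $y$ are non-adjacent, have the same neighborhood (they are $2$-twins), and $L_G(x,y)\equiv\{1,2\}\pmod 3$; (ii) $x$ and $y$ are adjacent and $L_G(x,y)\equiv\{0,1\}\pmod 3$. Moreover, if $G\neq K_{2,3}$, then $\{0,2\}\subseteq L_{G-y}(r,x)\pmod 3$ and $\{0,2\}\subseteq L_{G-x}(r,y)\pmod 3$.
   Context: All graphs are finite and simple. $V_2(H)$ is the set of degree-$2$ vertices of $H$. For distinct vertices $u,w$ of a graph $H$, $L_H(u,w)$ is the set of lengths (numbers of edges) of all $(u,w)$-paths in $H$. For sets of integers $A,B$, $A\subseteq B\pmod k$ means every $a\in A$ is congruent mod $k$ to some $b\in B$, and $A\equiv B\pmod k$ means both $A\subseteq B\pmod k$ and $B\subseteq A\pmod k$. Exceptional graphs: let $r$ be a degree-$2$ vertex of $G$. $G$ is an exceptional graph with root $r$ if there is a sequence $(G_0,x_0,y_0),\ldots,(G_n,x_n,y_n)$, $n\ge 0$, with $G_0=K_{2,3}$, $G_n=G$, such that for each $i$ the vertices $r,x_i,y_i$ are distinct degree-$2$ vertices of $G_i$, and for each $i<n$: (1) if $x_iy_i\notin E(G_i)$, $G_{i+1}$ is obtained from $G_i$ by adding a new path of length $3$ joining $x_i$ and $y_i$; (2) if $x_iy_i\in E(G_i)$, $G_{i+1}$ is obtained from $G_i$ either by adding a new vertex $v$ with $N_{G_{i+1}}(v)=N_{G_i}(w)$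 for some $w\in\{x_i,y_i\}$, or by adding a new $4$-cycle $abcda$ and the edges $ax_i,cy_i$. (Every such graph has exactly three degree-$2$ vertices.) *)

(* Defs.v *)
(* Finite simple graphs are represented with vertices drawn
   from an ambient finType T: a vertex set [vs] and an edge set [es] of
   2-element subsets of [vs]. *)
From mathcomp Require Import all_boot.
Set Implicit Arguments. Unset Strict Implicit. Unset Printing Implicit Defensive.

Record graph (T : finType) := Graph { vs : {set T}; es : {set {set T}} }.

Section Graphs.
Variable T : finType.
Implicit Types (G : graph T) (u v w x y r : T).

Definition wf_graph G := forall e, e \in es G -> (#|e| == 2) && (e \subset vs G).

Definition adj G u v : bool := (u != v) && ([set u; v] \in es G).

Definition nbh G v : {set T} := [set u in vs G | adj G v u].

Definition deg G v : nat := #|nbh G v|.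

Definition V2 G : {set T} := [set v in vs G | deg G v == 2].

Definition del G v : graph T := Graph (vs G :\ v) [set e in es G | v \notin e].

(* s is the tail of a (u,w)-path u :: s in G: distinct vertices of G,
   consecutive ones adjacent, ending at w. Its length is size s. *)
Definition gpath G u w (s : seq T) : bool :=
  [&& path (adj G) u s, last u s == w, uniq (u :: s) & all (fun z => z \in vs G) (u :: s)].

Definition Lset G u w : nat -> Prop := fun n => exists s, gpath G u w s /\ size s = n.

Definition subset_mod (A B : nat -> Prop) (k : nat) : Prop :=
  forall a, A a -> exists b, B b /\ a = b %[mod k].
Definition equiv_mod (A B : nat -> Prop) (k : nat) : Prop :=
  subset_mod A B k /\ subset_mod B A k.

Definition natset (s : seq nat) : nat -> Prop := fun n => n \in s.

Definition isK23 G : Prop :=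
  exists a1 a2 b1 b2 b3 : T,
    [/\ uniq [:: a1; a2; b1; b2; b3],
        vs G = [set a1; a2; b1; b2; b3] &
        es G = [set [set a1; b1]; [set a1; b2]; [set a1; b3];
                    [set a2; b1]; [set a2; b2]; [set a2; b3]]].

(* One step G_i -> G_{i+1} of the construction, with r, x = x_i, y = y_i. *)
Definition ext_step r G x y G' : Prop :=
  [/\ uniq [:: r; x; y], r \in V2 G, x \in V2 G, y \in V2 G &
  (~~ adj G x y /\
     exists p q : T, [/\ uniq [:: p; q], p \notin vs G, q \notin vs G,
        vs G' = vs G :|: [set p; q] &
        es G' = es G :|: [set [set x; p]; [set p; q]; [set q; y]]])
  \/
  (adj G x y /\
     (
      (exists v w : T, [/\ v \notin vs G, w \in [:: x; y],
          vs G' = v |: vs G &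
          es G' = es G :|: [set [set v; u] | u in nbh G w]])
      \/
      (exists a b c d : T, [/\ uniq [:: a; b; c; d],
          [&& a \notin vs G, b \notin vs G, c \notin vs G & d \notin vs G],
          vs G' = vs G :|: [set a; b; c; d] &
          es G' = es G :|: [set [set a; b]; [set b; c]; [set c; d]; [set d; a];
                                [set a; x]; [set c; y]]])))].

(* exc r G : G = G_n for some sequence G_0 = K_{2,3}, ..., G_n built as above
   (the conditions for i < n are imposed by ext_step). *)
Inductive exc (r : T) : graph T -> Prop :=
| exc_base G : isK23 G -> r \in V2 G -> exc r G
| exc_step G x y G' : exc r G -> ext_step r G x y G' -> exc r G'.

(* exceptional graph with root r: also the condition for i = n *)
Definition exceptional G r : Prop :=
  exc r G /\ exists x y, uniq [:: r; x; y] /\ [/\ r \in V2 G, x \in V2 G & y \in V2 G].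

End Graphs.

(* Main.v *)
Require Import Defs.
From mathcomp Require Import all_boot zify.
Set Implicit Arguments. Unset Strict Implicit. Unset Printing Implicit Defensive.

Section Basic.
Variable T : finType.
Implicit Types (G H : graph T) (u v w x y z r : T) (s t : seq T).

Lemma set2_eqE a b c d :
  ([set a; b] == [set c; d] :> {set T}) = ((a == c) && (b == d)) || ((a == d) && (b == c)).
Proof.
apply/idP/idP.
- move/eqP=> E.
  have ha : a \in [set c; d] by rewrite -E set21.
  have hb : b \in [set c; d] by rewrite -E set22.
  have hc : c \in [set a; b] by rewrite E set21.
  have hd : d \in [set a; b] by rewrite E set22.
  move: ha hb hc hd; rewrite !inE.
  case/orP=> /eqP->; case/orP=> /eqP->; rewrite ?eqxx ?orbT ?andbT ?orbb //=.
  + by move=> _ /eqP->; rewrite eqxx.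
  + by move=> /eqP->.
- by case/orP=> /andP[/eqP-> /eqP->] //; rewrite setUC.
Qed.

Lemma set2_eq a b c d :
  [set a; b] = [set c; d] :> {set T} -> (a = c /\ b = d) \/ (a = d /\ b = c).
Proof. by move/eqP; rewrite set2_eqE => /orP[]/andP[/eqP-> /eqP->]; [left|right]. Qed.

Lemma adj_sym G u v : adj G u v = adj G v u.
Proof. by rewrite /adj eq_sym setUC. Qed.

Lemma adj_neq G u v : adj G u v -> u != v.
Proof. by case/andP. Qed.

Lemma adj_vs G u v : wf_graph G -> adj G u v -> (u \in vs G) && (v \in vs G).
Proof.
move=> wf /andP[_ /wf /andP[_ /subsetP s]].
by rewrite !s // !inE eqxx ?orbT.
Qed.

Lemma adj_nvs G u v : wf_graph G -> u \notin vs G -> adj G u v = false.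
Proof. by move=> wf hu; apply/negbTE/negP=> /(adj_vs wf)/andP[h _]; rewrite h in hu. Qed.

Lemma adj_nvs2 G u v : wf_graph G -> v \notin vs G -> adj G u v = false.
Proof. by move=> wf hu; rewrite adj_sym adj_nvs. Qed.

Lemma in_nbh G u v : (v \in nbh G u) = (v \in vs G) && adj G u v.
Proof. by rewrite inE. Qed.

Lemma gpath_nil G u w : gpath G u w [::] = (u == w) && (u \in vs G).
Proof. by rewrite /gpath /= andbT. Qed.

Lemma gpath_cons G u w z s :
  gpath G u w (z :: s) = [&& adj G u z, u \notin z :: s, u \in vs G & gpath G z w s].
Proof.
rewrite /gpath /=.
by case: (adj G u z); case: (path _ _ _); case: (last _ _ == w);
   case: (u \in vs G); case: (u \notin _); case: (z \notin s); case: (uniq s);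
   case: (z \in vs G); case: (all _ _).
Qed.

Lemma gpath_rcons G u w t z :
  gpath G u w (rcons t z) =
  [&& z == w, gpath G u (last u t) t, adj G (last u t) z, z \notin u :: t & z \in vs G].
Proof.
rewrite /gpath -!rcons_cons rcons_path last_rcons rcons_uniq all_rcons eqxx /=.
by case: (path (adj G) u t); case: (adj G (last u t) z); case: (z == w);
   case: (z \in u :: t); case: (u \in t); case: (uniq t); case: (z \in vs G);
   case: (u \in vs G); case: (all _ t).
Qed.

Lemma gpath_last G u w s : gpath G u w s -> last u s = w.
Proof. by case/and4P=> _ /eqP. Qed.

Lemma gpath_vs G u w s : gpath G u w s -> {subset u :: s <= vs G}.
Proof. by case/and4P=> _ _ _ /allP. Qed.

Lemma gpath_uniq G u w s : gpath G u w s -> uniq (u :: s).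
Proof. by case/and4P. Qed.

Lemma gpath_rev G u w s : gpath G u w s -> gpath G w u (rev (belast u s)).
Proof.
case/and4P=> p /eqP l un al.
have e : w :: rev (belast u s) = rev (u :: s).
  by rewrite [u :: s]lastI rev_rcons l.
rewrite /gpath e rev_uniq un all_rev al -l rev_path.
have -> : path (fun a b => adj G b a) u s = path (adj G) u s.
  by apply: eq_path => a b; rewrite adj_sym.
rewrite p /= andbT.
rewrite l -/(last w (rev (belast u s))).
have -> : last w (rev (belast u s)) = last w (w :: rev (belast u s)) by [].
by rewrite e rev_cons last_rcons.
Qed.

Lemma size_rev_belast u s : size (rev (belast u s)) = size s.
Proof. by rewrite size_rev size_belast. Qed.

Lemma gpath_mono G H u w s :
  vs G \subset vs H -> es G \subset es H -> gpath G u w s -> gpath H u w s.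
Proof.
move=> /subsetP sv /subsetP se /and4P[p l un al].
apply/and4P; split=> //; last by apply/allP=> a /(allP al)/sv.
by apply: sub_path p => a b; rewrite /adj => /andP[-> /se].
Qed.

Lemma gpath_restr G H u w s :
  gpath H u w s -> {subset u :: s <= vs G} ->
  (forall a b, a \in vs G -> b \in vs G -> adj H a b -> adj G a b) ->
  gpath G u w s.
Proof.
move=> /and4P[p l un _] sub hab.
apply/and4P; split=> //; last by apply/allP.
apply: (@sub_in_path _ (mem (vs G))) p; last by apply/allP.
by move=> a b ha hb; apply: hab.
Qed.

Lemma adj_del G v a b : adj (del G v) a b = [&& adj G a b, v != a & v != b].
Proof.
rewrite /adj /del /= inE !inE negb_or.
by case: (a != b); case: ([set a; b] \in es G); case: (v != a); case: (v != b).
Qed.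

Lemma gpath_del G v u w s : gpath (del G v) u w s = gpath G u w s && (v \notin u :: s).
Proof.
apply/idP/idP.
- move=> h; have hv := gpath_vs h.
  have nv : v \notin u :: s.
    by apply/negP=> /hv; rewrite !inE eqxx.
  rewrite nv andbT; apply: gpath_restr h _ _.
  + by move=> a /hv; rewrite !inE => /andP[].
  + by move=> a b _ _; rewrite adj_del => /andP[].
- case/andP=> h nv; have hv := gpath_vs h; apply: gpath_restr h _ _.
  + move=> a ha; rewrite !inE (hv _ ha) andbT.
    by apply/eqP=> e; rewrite -e ha in nv.
  + move=> a b; rewrite !inE adj_del => /andP[na _] /andP[nb _] ->.
    by rewrite !(eq_sym v) na nb.
Qed.


Lemma ext_path G u w s z :
  gpath G u w s -> adj G w z -> z \notin u :: s -> z \in vs G -> gpath G u z (rcons s z).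
Proof.
move=> h a n v; rewrite gpath_rcons eqxx (gpath_last h) h a n v.
by [].
Qed.

Lemma pre_path G u w s z :
  gpath G u w s -> adj G z u -> z \notin u :: s -> z \in vs G -> gpath G z w (u :: s).
Proof. by move=> h a n v; rewrite gpath_cons a n v h. Qed.

Lemma nbh_mono G H z : vs G \subset vs H -> es G \subset es H -> nbh G z \subset nbh H z.
Proof.
move=> /subsetP sv /subsetP se; apply/subsetP=> a; rewrite !inE => /andP[/sv -> ].
by rewrite /adj => /andP[-> /se].
Qed.

Lemma deg_mono G H z : vs G \subset vs H -> es G \subset es H -> deg G z <= deg H z.
Proof. by move=> sv se; apply: subset_leq_card; apply: nbh_mono. Qed.

Lemma deg_grow G H z n : vs G \subset vs H -> es G \subset es H -> n \notin vs G ->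
  n \in nbh H z -> deg G z < deg H z.
Proof.
move=> sv se nv nh.
have nn : n \notin nbh G z by rewrite inE (negbTE nv).
have : #|n |: nbh G z| <= deg H z.
  by apply: subset_leq_card; rewrite subUset sub1set nh nbh_mono.
by rewrite cardsU1 nn.
Qed.

Lemma deg_eq2 G z a b : a != b -> nbh G z = [set a; b] -> deg G z = 2.
Proof. by move=> ne e; rewrite /deg e cards2 ne. Qed.

Lemma card3 (a b c : T) : uniq [:: a; b; c] -> #|[set a; b; c]| = 3.
Proof.
rewrite /= !inE negb_or => /andP[/andP[ab ac] /andP[bc _]].
by rewrite -setUA cardsU1 cards2 bc !inE negb_or ab ac.
Qed.

Lemma deg_ge3 G z a b c : uniq [:: a; b; c] -> a \in nbh G z -> b \in nbh G z ->
  c \in nbh G z -> 3 <= deg G z.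
Proof.
move=> u ha hb hc; rewrite -(card3 u); apply: subset_leq_card.
by rewrite !subUset !sub1set ha hb hc.
Qed.

End Basic.

Section Inv.
Variable T : finType.
Implicit Types (G H : graph T) (u v w x y z r : T) (s t : seq T).

Definition Up G u w (S : seq nat) := forall n, Lset G u w n -> n %% 3 \in S.
Definition Hit G u w k := exists n, Lset G u w n /\ n %% 3 = k.

Lemma Hit_gen G H u w u' w' k m :
  Hit G u w k ->
  (forall s, gpath G u w s -> exists s', gpath H u' w' s' /\ size s' = size s + m) ->
  Hit H u' w' ((k + m) %% 3).
Proof.
move=> [n [[s [hs <-]] hk]] f; have [s' [hs' e]] := f s hs.
by exists (size s'); split; [exists s' | rewrite e -hk modnDml].
Qed.

Lemma Hit_mono G H u w k : vs G \subset vs H -> es G \subset es H -> Hit G u w k -> Hit H u w k.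
Proof.
move=> sv se h; have := Hit_gen (H := H) (u' := u) (w' := w) (m := 0) h.
rewrite addn0 (_ : k %% 3 = k); last by case: h => n [_ <-]; rewrite modn_mod.
by apply=> s hs; exists s; rewrite addn0; split=> //; apply: gpath_mono hs.
Qed.

Lemma Hit_del G v u w k : Hit (del G v) u w k -> Hit G u w k.
Proof.
by move=> [n [[s [hs e]] hk]]; exists n; split=> //; exists s; move: hs; rewrite gpath_del => /andP[].
Qed.

Lemma Lset_rev G u w n : Lset G u w n -> Lset G w u n.
Proof. by move=> [s [h <-]]; exists (rev (belast u s)); rewrite size_rev_belast; split=> //; apply: gpath_rev. Qed.

Lemma Up_rev G u w S : Up G u w S -> Up G w u S.
Proof. by move=> h n /Lset_rev /h. Qed.

Lemma Hit_rev G u w k : Hit G u w k -> Hit G w u k.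
Proof. by move=> [n [/Lset_rev h e]]; exists n. Qed.

Definition Cprop r G x y :=
  [/\ Hit (del G y) r x 0, Hit (del G y) r x 2, Hit (del G x) r y 0 & Hit (del G x) r y 2].
Definition Aprop G x y :=
  (~~ adj G x y /\ [/\ nbh G x = nbh G y, Up G x y [:: 1; 2], Hit G x y 1 & Hit G x y 2])
  \/ (adj G x y /\ [/\ Up G x y [:: 0; 1], Hit G x y 0 & Hit G x y 1]).
Definition Bprop r G x y := [/\ Hit G r x 1, Hit G r x 2, Hit G r y 1 & Hit G r y 2].
Definition Pprop r G x y :=
  [/\ Aprop G x y, Bprop r G x y, adj G x y -> Cprop r G x y & isK23 G \/ Cprop r G x y].
Definition Inv r G :=
  [/\ wf_graph G, forall z, z \in vs G -> 1 < deg G z, #|V2 G :\ r| = 2 &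
      forall x y, x != y -> V2 G :\ r = [set x; y] -> Pprop r G x y].

Lemma Cprop_sym r G x y : Cprop r G x y -> Cprop r G y x.
Proof. by case. Qed.

Lemma Pprop_sym r G x y : Pprop r G x y -> Pprop r G y x.
Proof.
case=> hA [b1 b2 b3 b4] hC hK; split.
- case: hA => [[na [e u h1 h2]]|[a [u h0 h1]]].
  + left; split; first by rewrite adj_sym.
    by split; [rewrite e| apply: Up_rev | apply: Hit_rev | apply: Hit_rev].
  + right; split; first by rewrite adj_sym.
    by split; [apply: Up_rev | apply: Hit_rev | apply: Hit_rev].
- by split.
- by rewrite adj_sym => /hC /Cprop_sym.
- by case: hK => [?|/Cprop_sym]; [left|right].
Qed.

Lemma Inv_intro r G p q :
  wf_graph G -> (forall z, z \in vs G -> 1 < deg G z) -> p != q ->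
  V2 G :\ r = [set p; q] -> Pprop r G p q -> Inv r G.
Proof.
move=> wf hd npq e hP; split=> //; first by rewrite e cards2 npq.
move=> x y _; rewrite e => /esym /set2_eq [[-> ->]|[-> ->]] //.
exact: Pprop_sym.
Qed.

Lemma V2_eq r G p q :
  p \in vs G -> q \in vs G -> deg G p = 2 -> deg G q = 2 -> p != r -> q != r ->
  (forall z, z \in vs G -> z != p -> z != q -> z != r -> deg G z != 2) ->
  V2 G :\ r = [set p; q].
Proof.
move=> hp hq dp dq pr qr hz; apply/setP=> z; rewrite !inE.
have [->|nzp] := eqVneq z p; first by rewrite pr hp dp.
have [->|nzq] := eqVneq z q; first by rewrite qr hq dq.
have [->|nzr] := eqVneq z r; first by [].
rewrite /=; case hv: (z \in vs G) => //=.
by apply/negbTE/hz.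
Qed.

End Inv.

Ltac eqF := rewrite ?eqxx; repeat match goal with
 | H : is_true (?a != ?b) |- context [?a == ?b] => rewrite (negbTE H)
 | H : is_true (?a != ?b) |- context [?b == ?a] => rewrite (eq_sym b a) (negbTE H)
end.

Ltac bsimp := rewrite ?andbF ?andFb ?orbF ?orFb ?andbT ?andTb ?orbT ?orTb.

Section Gen.
Variable T : finType.
Implicit Types (G H : graph T) (u v w x y z r : T) (s t : seq T).

Lemma neq_vs G a b : a \in vs G -> b \notin vs G -> a != b.
Proof. by move=> ha hb; apply/eqP=> e; rewrite -e ha in hb. Qed.

Lemma adjU G G' E a b : es G' = es G :|: E ->
  adj G' a b = adj G a b || (a != b) && ([set a; b] \in E).
Proof. by move=> ee; rewrite /adj ee in_setU; case: (a != b). Qed.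

Lemma gpath_loop G u s : gpath G u u s -> s = [::].
Proof.
case: s => // z s h; have l : last z s = u := gpath_last h; have un := gpath_uniq h.
move: un; rewrite /= => /andP[nu _].
have : last z s \in z :: s by apply: mem_last.
by rewrite l (negbTE nu).
Qed.

Lemma nbh2 G z a b : (forall w, adj G z w -> w = a \/ w = b) -> adj G z a -> adj G z b ->
  a \in vs G -> b \in vs G -> nbh G z = [set a; b].
Proof.
move=> h za zb av bv; apply/setP=> w; rewrite !inE.
apply/idP/idP.
- by case/andP=> _ /h [->|->]; rewrite eqxx ?orbT.
- by case/orP=> /eqP->; rewrite ?av ?bv.
Qed.

Lemma last_in u t : t != [::] -> last u t \in t.
Proof. by case: t => // z t _; rewrite /=; apply: mem_last. Qed.

Lemma V2_deg G z : z \in V2 G -> (z \in vs G) /\ deg G z = 2.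
Proof. by rewrite inE => /andP[-> /eqP]. Qed.

End Gen.

Section Gen2.
Variable T : finType.
Implicit Types (G H : graph T) (u v w x y z r : T) (s t : seq T).

Lemma uniq3 (a b c : T) : uniq [:: a; b; c] -> [/\ a != b, a != c & b != c].
Proof. by rewrite /= !inE !negb_or => /and3P[/andP[-> ->] -> _]. Qed.

Lemma uniq2 (a b : T) : uniq [:: a; b] -> a != b.
Proof. by rewrite /= !inE andbT. Qed.

Lemma uniq4 (a b c d : T) : uniq [:: a; b; c; d] ->
  [/\ a != b, a != c, a != d, b != c & (b != d) && (c != d)].
Proof. by rewrite /= !inE !negb_or => /and4P[/and3P[-> -> ->] /andP[-> ->] -> _]. Qed.

Lemma notin_path G u w s n : gpath G u w s -> n \notin vs G -> n \notin u :: s.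
Proof. by move=> h hn; apply/negP=> /(gpath_vs h); apply/negP. Qed.

Lemma Hit_gen' G H u w u' w' k m k' :
  (k + m) %% 3 = k' -> Hit G u w k ->
  (forall s, gpath G u w s -> exists s', gpath H u' w' s' /\ size s' = size s + m) ->
  Hit H u' w' k'.
Proof. by move=> <-; apply: Hit_gen. Qed.

Lemma Hit_gen0 G H u w u' w' k :
  Hit G u w k ->
  (forall s, gpath G u w s -> exists s', gpath H u' w' s' /\ size s' = size s) ->
  Hit H u' w' k.
Proof.
move=> h f; apply: (Hit_gen' (m := 0) _ h); last by move=> s /f [s' [? e]]; exists s'; rewrite addn0.
by case: h => n [_ <-]; rewrite addn0 modn_mod.
Qed.

Lemma in_rcons_cons (a u z : T) t : (a \in u :: rcons t z) = (a == z) || (a \in u :: t).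
Proof. by rewrite -rcons_cons mem_rcons. Qed.

End Gen2.

Section Gen3.
Variable T : finType.
Implicit Types (G H : graph T) (u v w x y z r : T) (s t : seq T).

Lemma ext_new G H u w s n : vs G \subset vs H -> es G \subset es H ->
  gpath G u w s -> adj H w n -> n \notin vs G -> n \in vs H -> gpath H u n (rcons s n).
Proof.
move=> sv se hs a nv nv'; apply: ext_path (gpath_mono sv se hs) a _ nv'.
exact: notin_path hs nv.
Qed.

Lemma ext_new2 G H u w s n m : vs G \subset vs H -> es G \subset es H ->
  gpath G u w s -> adj H w n -> adj H n m -> n \notin vs G -> m \notin vs G -> n != m ->
  n \in vs H -> m \in vs H -> gpath H u m (rcons (rcons s n) m).
Proof.
move=> sv se hs a1 a2 nv mv nm nv' mv'; apply: ext_path (ext_new sv se hs a1 nv nv') a2 _ mv'.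
by rewrite in_rcons_cons negb_or eq_sym nm (notin_path hs mv).
Qed.

End Gen3.

Lemma ge3_neq2 n : 3 <= n -> n != 2.
Proof. by move=> h; apply/eqP=> e; rewrite e in h. Qed.
Lemma grow_neq2 m n : m = 2 -> m < n -> n != 2.
Proof. move=> -> h; exact: ge3_neq2. Qed.
Lemma mono_neq2 m n : m != 2 -> 1 < m -> m <= n -> n != 2.
Proof. move=> h1 h2 h3; apply: ge3_neq2; lia. Qed.
Lemma m12_02 n : n %% 3 \in [:: 1; 2] -> n.+2 %% 3 \in [:: 0; 1].
Proof. rewrite !inE; lia. Qed.
Lemma m01_12 n : n %% 3 \in [:: 0; 1] -> (n + 4) %% 3 \in [:: 1; 2].
Proof. rewrite !inE; lia. Qed.
Lemma m01_12' n : n.+1 %% 3 \in [:: 0; 1] -> n.+2 %% 3 \in [:: 1; 2].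
Proof. rewrite !inE; lia. Qed.
Lemma adjC (T : finType) (G : graph T) u v : adj G u v -> adj G v u.
Proof. by rewrite adj_sym. Qed.
Lemma nin_cons (T : finType) (a u : T) s : (a \notin u :: s) = (a != u) && (a \notin s).
Proof. by rewrite in_cons negb_or. Qed.
Lemma nin_rcons (T : finType) (a z : T) s : (a \notin rcons s z) = (a != z) && (a \notin s).
Proof. by rewrite mem_rcons in_cons negb_or. Qed.
Lemma nin_rcons_cons (T : finType) (a u z : T) s :
  (a \notin u :: rcons s z) = (a != z) && (a \notin u :: s).
Proof. by rewrite in_rcons_cons negb_or. Qed.
Lemma addn4' n : n.+4 = n + 4. Proof. by rewrite addnC. Qed.
Lemma m01_12b n : n %% 3 \in [:: 0; 1] -> (n + 2).+2 %% 3 \in [:: 1; 2].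
Proof. rewrite !inE; lia. Qed.
Lemma two_elem (T : finType) (A : {set T}) (y z z' : T) : #|A| = 2 -> y \in A -> z \in A -> z' \in A ->
  z != z' -> z = y \/ z' = y.
Proof.
move/eqP/cards2P=> [p [q [pq ->]]]; rewrite !inE.
by case/orP=> /eqP-> /orP[]/eqP-> /orP[]/eqP->; rewrite ?eqxx //; auto.
Qed.
Lemma even_small n : ~~ odd n -> 0 < n -> n <= 4 -> n %% 3 \in [:: 1; 2].
Proof. by case: n => [|[|[|[|[|n]]]]]. Qed.
Lemma uniq5 (T : finType) (a b c d e : T) : uniq [:: a; b; c; d; e] ->
  [/\ [/\ a != b, a != c, a != d & a != e], [/\ b != c, b != d & b != e], c != d, c != e & d != e].
Proof.
rewrite /= !inE !negb_or.
by case/and5P=> /and4P[-> -> -> ->] /and3P[-> -> ->] /andP[-> ->] -> _.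
Qed.

Section Step1.
Variables (T : finType) (r x y p q : T) (G G' : graph T).
Hypotheses (wf : wf_graph G) (hd : forall z, z \in vs G -> 1 < deg G z)
  (e2 : V2 G :\ r = [set x; y]) (hP : Pprop r G x y) (u : uniq [:: r; x; y])
  (hr : r \in V2 G) (hx : x \in V2 G) (hy : y \in V2 G) (na : ~~ adj G x y)
  (upq : uniq [:: p; q]) (hp : p \notin vs G) (hq : q \notin vs G)
  (ev : vs G' = vs G :|: [set p; q])
  (ee : es G' = es G :|: [set [set x; p]; [set p; q]; [set q; y]]).

Ltac facts :=
  have [rv _] := V2_deg hr; have [xv dx] := V2_deg hx; have [yv dy] := V2_deg hy;
  have [rx ry xy] := uniq3 u; have pq := uniq2 upq;
  have xp := neq_vs xv hp; have yp := neq_vs yv hp; have rp := neq_vs rv hp;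
  have xq := neq_vs xv hq; have yq := neq_vs yv hq; have rq := neq_vs rv hq.

Lemma s1_sv : vs G \subset vs G'.
Proof. by rewrite ev subsetUl. Qed.
Lemma s1_se : es G \subset es G'.
Proof. by rewrite ee subsetUl. Qed.

Lemma s1_vs z : (z \in vs G') = [|| z \in vs G, z == p | z == q].
Proof. by rewrite ev !inE orbA. Qed.

Lemma s1_old a b : a \in vs G -> b \in vs G -> adj G' a b = adj G a b.
Proof.
move=> ha hb; facts.
have ap := neq_vs ha hp; have aq := neq_vs ha hq; have bp := neq_vs hb hp; have bq := neq_vs hb hq.
rewrite (adjU _ _ ee) !inE !set2_eqE; eqF.
by bsimp.
Qed.

Lemma s1_adjp z : adj G' p z -> z = x \/ z = q.
Proof.
facts; rewrite (adjU _ _ ee) (adj_nvs _ wf hp) /= !inE !set2_eqE; eqF.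
bsimp => /andP[_ /orP[]/eqP->]; by [left|right].
Qed.

Lemma s1_adjq z : adj G' q z -> z = p \/ z = y.
Proof.
facts; rewrite (adjU _ _ ee) (adj_nvs _ wf hq) /= !inE !set2_eqE; eqF.
bsimp => /andP[_ /orP[]/eqP->]; by [left|right].
Qed.

Lemma s1_xp : adj G' x p.
Proof. facts; rewrite (adjU _ _ ee) !inE !set2_eqE; eqF; by bsimp. Qed.
Lemma s1_pq : adj G' p q.
Proof. facts; rewrite (adjU _ _ ee) !inE !set2_eqE; eqF; by bsimp. Qed.
Lemma s1_qy : adj G' q y.
Proof. facts; rewrite (adjU _ _ ee) !inE !set2_eqE; eqF; by bsimp. Qed.


Lemma s1_wf : wf_graph G'.
Proof.
move=> e; rewrite ee in_setU => /orP[/wf /andP[-> s]|]; first exact: subset_trans s s1_sv.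
facts; rewrite !inE => /orP[/orP[]|] /eqP->; rewrite cards2 subUset !sub1set !s1_vs; eqF.
all: by rewrite /=; bsimp; rewrite ?xv ?yv.
Qed.

Lemma s1_nbhp : nbh G' p = [set x; q].
Proof.
facts; apply: nbh2; [exact: s1_adjp| by rewrite adj_sym s1_xp | exact: s1_pq | |];
  by rewrite s1_vs ?xv ?eqxx ?orbT.
Qed.

Lemma s1_nbhq : nbh G' q = [set p; y].
Proof.
facts; apply: nbh2; [exact: s1_adjq| by rewrite adj_sym s1_pq | exact: s1_qy | |];
  by rewrite s1_vs ?yv ?eqxx ?orbT.
Qed.

Lemma s1_degp : deg G' p = 2.
Proof. facts; exact: deg_eq2 xq s1_nbhp. Qed.
Lemma s1_degq : deg G' q = 2.
Proof. facts; apply: deg_eq2 s1_nbhq; by rewrite eq_sym. Qed.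

Lemma s1_mindeg z : z \in vs G' -> 1 < deg G' z.
Proof.
rewrite s1_vs => /or3P[hz|/eqP->|/eqP->]; rewrite ?s1_degp ?s1_degq //.
exact: leq_trans (hd hz) (deg_mono _ s1_sv s1_se).
Qed.

Lemma s1_V2 : V2 G' :\ r = [set p; q].
Proof.
facts; apply: V2_eq; rewrite ?s1_vs ?eqxx ?orbT ?s1_degp ?s1_degq //; try by rewrite eq_sym.
move=> z; rewrite s1_vs => hz zp zq zr; move: hz; eqF; bsimp => hz.
have [->|zx] := eqVneq z x.
  have := @deg_grow T G G' x p s1_sv s1_se hp.
  by rewrite in_nbh s1_vs eqxx orbT s1_xp dx => /(_ isT); exact: grow_neq2.
have [->|zy] := eqVneq z y.
  have := @deg_grow T G G' y q s1_sv s1_se hq.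
  by rewrite in_nbh s1_vs eqxx !orbT adj_sym s1_qy dy => /(_ isT); exact: grow_neq2.
have : z \notin V2 G :\ r by rewrite e2 !inE negb_or zx zy.
rewrite !inE zr hz /= => dz.
exact: mono_neq2 dz (hd hz) (deg_mono z s1_sv s1_se).
Qed.

Lemma s1_A : [/\ Up G x y [:: 1; 2], Hit G x y 1 & Hit G x y 2].
Proof. by case: hP => [[[_ [_ u1 h1 h2]]|[a _]] _ _ _]; [|move: na; rewrite a]. Qed.

Lemma s1_up : Up G' p q [:: 0; 1].
Proof.
have [u1 _ _] := s1_A.
move=> n [s [hs <-]]; facts.
case: s hs => [|z s]; first by rewrite gpath_nil (negbTE pq).
rewrite gpath_cons => /and4P[apz nz pv hs].
case: (s1_adjp apz) => ez; subst z; last by rewrite (gpath_loop hs).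
case/lastP: s hs nz => [|t w] hs nz; first by move: hs; rewrite gpath_nil (negbTE xq).
move: hs; rewrite gpath_rcons => /and5P[/eqP ew ht hl hw wv]; subst w.
move: nz; rewrite in_rcons_cons negb_or => /andP[_ nz].
case: (s1_adjq (adjC hl)) => el.
  by move: nz; rewrite -el mem_last.
rewrite el in ht.
have ht' : gpath G x y t.
  have hv := gpath_vs ht.
  apply: gpath_restr ht _ _; last by move=> a b ha hb; rewrite s1_old.
  move=> a ha; have := hv _ ha; rewrite s1_vs => /or3P[//|/eqP ea|/eqP ea].
  - by move: nz; rewrite -ea ha.
  - by move: hw; rewrite -ea ha.
have := u1 _ (ex_intro _ t (conj ht' erefl)).
rewrite /= size_rcons; exact: m12_02.
Qed.


Lemma s1_B : Bprop r G' p q.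
Proof.
case: hP => _ [x1 x2 y1 y2] _ _; facts.
have pv' : p \in vs G' by rewrite s1_vs eqxx orbT.
have qv' : q \in vs G' by rewrite s1_vs eqxx !orbT.
split.
- apply: (Hit_gen' (m := 2) _ y2) => // s hs; exists (rcons (rcons s q) p); split.
    by apply: ext_new2 s1_sv s1_se hs (adjC s1_qy) (adjC s1_pq) hq hp _ qv' pv'; rewrite eq_sym.
  by rewrite !size_rcons addn2.
- apply: (Hit_gen' (m := 1) _ x1) => // s hs; exists (rcons s p); split.
    exact: ext_new s1_sv s1_se hs s1_xp hp pv'.
  by rewrite !size_rcons addn1.
- apply: (Hit_gen' (m := 2) _ x2) => // s hs; exists (rcons (rcons s p) q); split.
    exact: ext_new2 s1_sv s1_se hs s1_xp s1_pq hp hq pq pv' qv'.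
  by rewrite !size_rcons addn2.
- apply: (Hit_gen' (m := 1) _ y1) => // s hs; exists (rcons s q); split.
    exact: ext_new s1_sv s1_se hs (adjC s1_qy) hq qv'.
  by rewrite !size_rcons addn1.
Qed.

Lemma s1_C : Cprop r G' p q.
Proof.
case: hP => _ [x1 x2 y1 y2] _ _; facts.
have pv' : p \in vs G' by rewrite s1_vs eqxx orbT.
have qv' : q \in vs G' by rewrite s1_vs eqxx !orbT.
split.
- apply: (Hit_gen' (m := 1) _ x2) => // s hs; exists (rcons s p); split.
    rewrite gpath_del (ext_new s1_sv s1_se hs s1_xp hp pv') /=.
    by rewrite in_rcons_cons negb_or eq_sym pq (notin_path hs hq).
  by rewrite !size_rcons addn1.
- apply: (Hit_gen' (m := 1) _ x1) => // s hs; exists (rcons s p); split.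
    rewrite gpath_del (ext_new s1_sv s1_se hs s1_xp hp pv') /=.
    by rewrite in_rcons_cons negb_or eq_sym pq (notin_path hs hq).
  by rewrite !size_rcons addn1.
- apply: (Hit_gen' (m := 1) _ y2) => // s hs; exists (rcons s q); split.
    rewrite gpath_del (ext_new s1_sv s1_se hs (adjC s1_qy) hq qv') /=.
    by rewrite in_rcons_cons negb_or pq (notin_path hs hp).
  by rewrite !size_rcons addn1.
- apply: (Hit_gen' (m := 1) _ y1) => // s hs; exists (rcons s q); split.
    rewrite gpath_del (ext_new s1_sv s1_se hs (adjC s1_qy) hq qv') /=.
    by rewrite in_rcons_cons negb_or pq (notin_path hs hp).
  by rewrite !size_rcons addn1.
Qed.

Lemma s1_inv : Inv r G'.
Proof.
have [_ h1 _] := s1_A; facts.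
apply: (Inv_intro s1_wf s1_mindeg pq s1_V2).
split; [|exact: s1_B|by move=> _; exact: s1_C|by right; exact: s1_C].
right; split; first exact: s1_pq.
split; first exact: s1_up.
- apply: (Hit_gen' (m := 2) _ h1) => // s hs; exists (x :: rcons s q); split.
    apply: pre_path (ext_new s1_sv s1_se hs (adjC s1_qy) hq _) (adjC s1_xp) _ _.
    + by rewrite s1_vs eqxx !orbT.
    + by rewrite in_rcons_cons negb_or pq (notin_path hs hp).
    + by rewrite s1_vs eqxx orbT.
  by rewrite /= size_rcons addn2.
- exists 1; split => //; exists [:: q]; split => //.
  by rewrite gpath_cons gpath_nil s1_pq !inE pq eqxx /= !s1_vs !eqxx !orbT.
Qed.

End Step1.

Section Step2b.
Variables (T : finType) (r x y a b c d : T) (G G' : graph T).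
Hypotheses (wf : wf_graph G) (hd : forall z, z \in vs G -> 1 < deg G z)
  (e2 : V2 G :\ r = [set x; y]) (hP : Pprop r G x y) (u : uniq [:: r; x; y])
  (hr : r \in V2 G) (hx : x \in V2 G) (hy : y \in V2 G) (axy : adj G x y)
  (uu : uniq [:: a; b; c; d])
  (hn : [&& a \notin vs G, b \notin vs G, c \notin vs G & d \notin vs G])
  (ev : vs G' = vs G :|: [set a; b; c; d])
  (ee : es G' = es G :|: [set [set a; b]; [set b; c]; [set c; d]; [set d; a];
                        [set a; x]; [set c; y]]).

Ltac facts :=
  have [rv _] := V2_deg hr; have [xv dx] := V2_deg hx; have [yv dy] := V2_deg hy;
  have [rx ry xy] := uniq3 u; have [ab ac ad bc /andP[bd cd]] := uniq4 uu;
  case/and4P: (hn) => ha hb hc hd';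
  have xa := neq_vs xv ha; have ya := neq_vs yv ha; have ra := neq_vs rv ha;
  have xb := neq_vs xv hb; have yb := neq_vs yv hb; have rb := neq_vs rv hb;
  have xc := neq_vs xv hc; have yc := neq_vs yv hc; have rc := neq_vs rv hc;
  have xd := neq_vs xv hd'; have yd := neq_vs yv hd'; have rd := neq_vs rv hd'.

Lemma s2_sv : vs G \subset vs G'.
Proof. by rewrite ev subsetUl. Qed.
Lemma s2_se : es G \subset es G'.
Proof. by rewrite ee subsetUl. Qed.

Lemma s2_vs z : (z \in vs G') = [|| z \in vs G, z == a, z == b, z == c | z == d].
Proof. by rewrite ev !inE !orbA. Qed.

Lemma s2_oldv z : z \in vs G' -> z != a -> z != b -> z != c -> z != d -> z \in vs G.
Proof. by rewrite s2_vs => h1 h2 h3 h4 h5; move: h1; eqF; bsimp. Qed.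

Lemma s2_old a' b' : a' \in vs G -> b' \in vs G -> adj G' a' b' = adj G a' b'.
Proof.
move=> ha' hb'; facts.
have := neq_vs ha' ha; have := neq_vs ha' hb; have := neq_vs ha' hc; have := neq_vs ha' hd';
have := neq_vs hb' ha; have := neq_vs hb' hb; have := neq_vs hb' hc; have := neq_vs hb' hd'.
move=> ? ? ? ? ? ? ? ?.
rewrite (adjU _ _ ee) !inE !set2_eqE; eqF.
by bsimp.
Qed.

Lemma s2_adja z : adj G' a z -> [\/ z = b, z = d | z = x].
Proof.
facts; rewrite (adjU _ _ ee) (adj_nvs _ wf ha) /= !inE !set2_eqE; eqF.
bsimp => /andP[_ h].
by case/orP: h => [/orP[/eqP->|/eqP->]|/eqP->]; [constructor 1|constructor 2|constructor 3].
Qed.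

Lemma s2_adjb z : adj G' b z -> z = a \/ z = c.
Proof.
facts; rewrite (adjU _ _ ee) (adj_nvs _ wf hb) /= !inE !set2_eqE; eqF.
by bsimp => /andP[_ /orP[]/eqP->]; [left|right].
Qed.

Lemma s2_adjc z : adj G' c z -> [\/ z = b, z = d | z = y].
Proof.
facts; rewrite (adjU _ _ ee) (adj_nvs _ wf hc) /= !inE !set2_eqE; eqF.
bsimp => /andP[_ h].
by case/orP: h => [/orP[/eqP->|/eqP->]|/eqP->]; [constructor 1|constructor 2|constructor 3].
Qed.

Lemma s2_adjd z : adj G' d z -> z = a \/ z = c.
Proof.
facts; rewrite (adjU _ _ ee) (adj_nvs _ wf hd') /= !inE !set2_eqE; eqF.
by bsimp => /andP[_ /orP[]/eqP->]; [right|left].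
Qed.

Lemma s2_ab : adj G' a b.
Proof. facts; rewrite (adjU _ _ ee) !inE !set2_eqE; eqF; by bsimp. Qed.
Lemma s2_bc : adj G' b c.
Proof. facts; rewrite (adjU _ _ ee) !inE !set2_eqE; eqF; by bsimp. Qed.
Lemma s2_cd : adj G' c d.
Proof. facts; rewrite (adjU _ _ ee) !inE !set2_eqE; eqF; by bsimp. Qed.
Lemma s2_da : adj G' d a.
Proof. facts; rewrite (adjU _ _ ee) !inE !set2_eqE; eqF; by bsimp. Qed.
Lemma s2_ax : adj G' a x.
Proof. facts; rewrite (adjU _ _ ee) !inE !set2_eqE; eqF; by bsimp. Qed.
Lemma s2_cy : adj G' c y.
Proof. facts; rewrite (adjU _ _ ee) !inE !set2_eqE; eqF; by bsimp. Qed.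


Lemma s2_wf : wf_graph G'.
Proof.
move=> e; rewrite ee in_setU => /orP[/wf /andP[-> s]|]; first exact: subset_trans s s2_sv.
facts; rewrite !inE => /orP[/orP[/orP[/orP[/orP[]|]|]|]|] /eqP->; rewrite cards2 subUset !sub1set !s2_vs; eqF.
all: by rewrite /=; bsimp; rewrite ?xv ?yv.
Qed.

Lemma s2_av : a \in vs G'. Proof. by rewrite s2_vs eqxx !orbT. Qed.
Lemma s2_bv : b \in vs G'. Proof. by rewrite s2_vs eqxx !orbT. Qed.
Lemma s2_cv : c \in vs G'. Proof. by rewrite s2_vs eqxx !orbT. Qed.
Lemma s2_dv : d \in vs G'. Proof. by rewrite s2_vs eqxx !orbT. Qed.

Lemma s2_nbhb : nbh G' b = [set a; c].
Proof. apply: nbh2 s2_adjb _ s2_bc s2_av s2_cv; by rewrite adj_sym s2_ab. Qed.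
Lemma s2_nbhd : nbh G' d = [set a; c].
Proof. apply: nbh2 s2_adjd s2_da _ s2_av s2_cv; by rewrite adj_sym s2_cd. Qed.
Lemma s2_degb : deg G' b = 2.
Proof. facts; exact: deg_eq2 ac s2_nbhb. Qed.
Lemma s2_degd : deg G' d = 2.
Proof. facts; exact: deg_eq2 ac s2_nbhd. Qed.
Lemma s2_dega : 3 <= deg G' a.
Proof.
facts; apply: (@deg_ge3 _ _ _ b d x); rewrite ?in_nbh ?s2_bv ?s2_dv ?s2_ab ?s2_ax //.
- by rewrite /= !inE; eqF; bsimp.
- by rewrite adj_sym s2_da.
- by rewrite s2_vs xv.
Qed.
Lemma s2_degc : 3 <= deg G' c.
Proof.
facts; apply: (@deg_ge3 _ _ _ b d y); rewrite ?in_nbh ?s2_bv ?s2_dv ?s2_cd ?s2_cy //.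
- by rewrite /= !inE; eqF; bsimp.
- by rewrite adj_sym s2_bc.
- by rewrite s2_vs yv.
Qed.

Lemma s2_mindeg z : z \in vs G' -> 1 < deg G' z.
Proof.
rewrite s2_vs => /orP[hz|/orP[/eqP->|/orP[/eqP->|/orP[/eqP->|/eqP->]]]];
  rewrite ?s2_degb ?s2_degd //.
- exact: leq_trans (hd hz) (deg_mono _ s2_sv s2_se).
- exact: leq_trans s2_dega.
- exact: leq_trans s2_degc.
Qed.

Lemma s2_V2 : V2 G' :\ r = [set b; d].
Proof.
facts; apply: V2_eq; rewrite ?s2_bv ?s2_dv ?s2_degb ?s2_degd //; try by rewrite eq_sym.
move=> z hz zb zd zr.
have [->|za] := eqVneq z a; first exact: ge3_neq2 s2_dega.
have [->|zc] := eqVneq z c; first exact: ge3_neq2 s2_degc.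
have {}hz := s2_oldv hz za zb zc zd.
have [->|zx] := eqVneq z x.
  have := @deg_grow T G G' x a s2_sv s2_se ha.
  by rewrite in_nbh s2_av adj_sym s2_ax dx => /(_ isT); exact: grow_neq2.
have [->|zy] := eqVneq z y.
  have := @deg_grow T G G' y c s2_sv s2_se hc.
  by rewrite in_nbh s2_cv adj_sym s2_cy dy => /(_ isT); exact: grow_neq2.
have : z \notin V2 G :\ r by rewrite e2 !inE negb_or zx zy.
rewrite !inE zr hz /= => dz.
exact: mono_neq2 dz (hd hz) (deg_mono z s2_sv s2_se).
Qed.

Lemma s2_full k : k < 3 -> Hit G r x k.
Proof.
have [_ _ /(_ axy) [c0 c2 c3 c4] _] := hP.
case: k => [_|[_|[_|//]]].
- exact: Hit_del c0.
- apply: (Hit_gen' (m := 1) _ c3) => // s; rewrite gpath_del => /andP[hs nx].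
  exists (rcons s x); rewrite size_rcons addn1; split=> //.
  exact: ext_path hs (adjC axy) nx (V2_deg hx).1.
- exact: Hit_del c2.
Qed.

Lemma s2_A0 : Up G x y [:: 0; 1] /\ Hit G x y 0.
Proof. by case: hP => [[[na _]|[_ [h1 h2 _]]] _ _ _]; [rewrite axy in na|]. Qed.

Lemma s2_restr u' w' t : gpath G' u' w' t -> {subset u' :: t <= vs G} -> gpath G u' w' t.
Proof. by move=> h s; apply: gpath_restr h s _ => a' b' ha hb; rewrite s2_old. Qed.

Lemma s2_inner t : gpath G' a c t -> b \notin a :: t -> d \notin a :: t ->
  exists t3, gpath G x y t3 /\ size t = size t3 + 2.
Proof.
facts; case: t => [|z t] h nb nd; first by move: h; rewrite gpath_nil (negbTE ac).
move: h; rewrite gpath_cons => /and4P[az na' _ h].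
case/lastP: t h na' nb nd => [|t w] h na' nb nd.
  move: h; rewrite gpath_nil => /andP[/eqP ez _]; rewrite ez in az.
  by case: (s2_adja az) => e; [move: bc|move: cd|move: xc]; rewrite e eqxx.
move: h; rewrite gpath_rcons => /and5P[/eqP ew ht hl hcn _]; subst w.
move: na' nb nd; rewrite !nin_cons !nin_rcons.
move=> /and3P[az' ac' nat] /and4P[ba bz bc' nbt] /and4P[da dz dc' ndt].
have ez : z = x.
  by case: (s2_adja az) => // e; [move: bz|move: dz]; rewrite e eqxx.
subst z.
have el : last x t = y.
  have := mem_last x t; rewrite in_cons => hm.
  case: (s2_adjc (adjC hl)) => // e.
  - by move: hm; rewrite e (negbTE bz) (negbTE nbt).
  - by move: hm; rewrite e (negbTE dz) (negbTE ndt).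
rewrite el in ht; exists t; rewrite /= size_rcons addn2; split => //.
have hv := gpath_vs ht.
apply: s2_restr ht _ => w hw; apply: s2_oldv (hv _ hw) _ _ _ _.
- by apply/eqP=> e; move: hw; rewrite e in_cons (negbTE az') (negbTE nat).
- by apply/eqP=> e; move: hw; rewrite e in_cons (negbTE bz) (negbTE nbt).
- by apply/eqP=> e; move: hcn; rewrite -e hw.
- by apply/eqP=> e; move: hw; rewrite e in_cons (negbTE dz) (negbTE ndt).
Qed.

Lemma s2_inner' t : gpath G' c a t -> b \notin c :: t -> d \notin c :: t ->
  exists t3, gpath G y x t3 /\ size t = size t3 + 2.
Proof.
facts; case: t => [|z t] h nb nd; first by move: h; rewrite gpath_nil eq_sym (negbTE ac).
move: h; rewrite gpath_cons => /and4P[az na' _ h].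
case/lastP: t h na' nb nd => [|t w] h na' nb nd.
  move: h; rewrite gpath_nil => /andP[/eqP ez _]; rewrite ez in az.
  by case: (s2_adjc az) => e; [move: ab|move: ad|move: ya]; rewrite e eqxx.
move: h; rewrite gpath_rcons => /and5P[/eqP ew ht hl hcn _]; subst w.
move: na' nb nd; rewrite !nin_cons !nin_rcons.
move=> /and3P[az' ac' nat] /and4P[ba bz bc' nbt] /and4P[da dz dc' ndt].
have ez : z = y.
  by case: (s2_adjc az) => // e; [move: bz|move: dz]; rewrite e eqxx.
subst z.
have el : last y t = x.
  have := mem_last y t; rewrite in_cons => hm.
  case: (s2_adja (adjC hl)) => // e.
  - by move: hm; rewrite e (negbTE bz) (negbTE nbt).
  - by move: hm; rewrite e (negbTE dz) (negbTE ndt).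
rewrite el in ht; exists t; rewrite /= size_rcons addn2; split => //.
have hv := gpath_vs ht.
apply: s2_restr ht _ => w hw; apply: s2_oldv (hv _ hw) _ _ _ _.
- by apply/eqP=> e; move: hcn; rewrite -e hw.
- by apply/eqP=> e; move: hw; rewrite e in_cons (negbTE bz) (negbTE nbt).
- by apply/eqP=> e; move: hw; rewrite e in_cons (negbTE az') (negbTE nat).
- by apply/eqP=> e; move: hw; rewrite e in_cons (negbTE dz) (negbTE ndt).
Qed.

Lemma s2_up : Up G' b d [:: 1; 2].
Proof.
have [u0 _] := s2_A0.
move=> n [s [hs <-]]; facts.
case: s hs => [|z s] hs; first by move: hs; rewrite gpath_nil (negbTE bd).
move: hs; rewrite gpath_cons => /and4P[bz nb _ hs].
case/lastP: s hs nb => [|t w] hs nb.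
  move: hs; rewrite gpath_nil => /andP[/eqP ez _]; rewrite ez in bz.
  by case: (s2_adjb bz) => e; [move: ad|move: cd]; rewrite e eqxx.
move: hs; rewrite gpath_rcons => /and5P[/eqP ew ht hl hdn _]; subst w.
move: nb; rewrite nin_cons nin_rcons => /and3P[nbz nbd nbt].
rewrite /= size_rcons.
case: (s2_adjb bz) => ez; subst z; case: (s2_adjd (adjC hl)) => el; rewrite el in ht.
- by rewrite (gpath_loop ht).
- have nb' : b \notin a :: t by rewrite nin_cons nbz nbt.
  have [t3 [h3 e3]] := s2_inner ht nb' hdn.
  rewrite e3; apply: m01_12b; apply: u0; exists t3; split => //.
- have nb' : b \notin c :: t by rewrite nin_cons nbz nbt.
  have [t3 [h3 e3]] := s2_inner' ht nb' hdn.
  rewrite e3; apply: m01_12b; apply: (Up_rev u0); exists t3; split => //.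
- by rewrite (gpath_loop ht).
Qed.

Lemma s2_B : Bprop r G' b d.
Proof.
facts; have f0 := s2_full (isT : 0 < 3); have f2 := s2_full (isT : 2 < 3).
split.
- apply: (Hit_gen' (m := 2) _ f2) => // s hs; exists (rcons (rcons s a) b); split.
    exact: ext_new2 s2_sv s2_se hs (adjC s2_ax) s2_ab ha hb ab s2_av s2_bv.
  by rewrite !size_rcons addn2.
- apply: (Hit_gen' (m := 2) _ f0) => // s hs; exists (rcons (rcons s a) b); split.
    exact: ext_new2 s2_sv s2_se hs (adjC s2_ax) s2_ab ha hb ab s2_av s2_bv.
  by rewrite !size_rcons addn2.
- apply: (Hit_gen' (m := 2) _ f2) => // s hs; exists (rcons (rcons s a) d); split.
    exact: ext_new2 s2_sv s2_se hs (adjC s2_ax) (adjC s2_da) ha hd' ad s2_av s2_dv.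
  by rewrite !size_rcons addn2.
- apply: (Hit_gen' (m := 2) _ f0) => // s hs; exists (rcons (rcons s a) d); split.
    exact: ext_new2 s2_sv s2_se hs (adjC s2_ax) (adjC s2_da) ha hd' ad s2_av s2_dv.
  by rewrite !size_rcons addn2.
Qed.

Lemma s2_C : Cprop r G' b d.
Proof.
facts; have f0 := s2_full (isT : 0 < 3); have f1 := s2_full (isT : 1 < 3).
split.
- apply: (Hit_gen' (m := 2) _ f1) => // s hs; exists (rcons (rcons s a) b); split.
    rewrite gpath_del (ext_new2 s2_sv s2_se hs (adjC s2_ax) s2_ab ha hb ab s2_av s2_bv) /=.
    by rewrite !nin_rcons_cons (notin_path hs hd') eq_sym bd eq_sym ad.
  by rewrite !size_rcons addn2.
- apply: (Hit_gen' (m := 2) _ f0) => // s hs; exists (rcons (rcons s a) b); split.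
    rewrite gpath_del (ext_new2 s2_sv s2_se hs (adjC s2_ax) s2_ab ha hb ab s2_av s2_bv) /=.
    by rewrite !nin_rcons_cons (notin_path hs hd') eq_sym bd eq_sym ad.
  by rewrite !size_rcons addn2.
- apply: (Hit_gen' (m := 2) _ f1) => // s hs; exists (rcons (rcons s a) d); split.
    rewrite gpath_del (ext_new2 s2_sv s2_se hs (adjC s2_ax) (adjC s2_da) ha hd' ad s2_av s2_dv) /=.
    by rewrite !nin_rcons_cons (notin_path hs hb) bd eq_sym ab.
  by rewrite !size_rcons addn2.
- apply: (Hit_gen' (m := 2) _ f0) => // s hs; exists (rcons (rcons s a) d); split.
    rewrite gpath_del (ext_new2 s2_sv s2_se hs (adjC s2_ax) (adjC s2_da) ha hd' ad s2_av s2_dv) /=.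
    by rewrite !nin_rcons_cons (notin_path hs hb) bd eq_sym ab.
  by rewrite !size_rcons addn2.
Qed.

Lemma s2_inv : Inv r G'.
Proof.
have [_ h0] := s2_A0; facts.
apply: (Inv_intro s2_wf s2_mindeg bd s2_V2).
split; [|exact: s2_B|by move=> _; exact: s2_C|by right; exact: s2_C].
left; split.
  by apply/negP=> /s2_adjb [] e; [move: ad|move: cd]; rewrite e eqxx.
split; [by rewrite s2_nbhb s2_nbhd|exact: s2_up| |].
- apply: (Hit_gen' (m := 4) _ h0) => // s hs; exists (a :: x :: rcons (rcons s c) d); split.
    have h1 := ext_new2 s2_sv s2_se hs (adjC s2_cy) s2_cd hc hd' cd s2_cv s2_dv.
    have h2 : gpath G' a d (x :: rcons (rcons s c) d).
      apply: pre_path h1 (adjC (adjC s2_ax)) _ s2_av.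
      have := notin_path hs ha; rewrite !nin_cons !nin_rcons => /andP[-> ->].
      by rewrite ad ac.
    apply: pre_path h2 (adjC s2_ab) _ s2_bv.
    have := notin_path hs hb; rewrite !nin_cons !nin_rcons => /andP[-> ->].
    by rewrite eq_sym ab bd bc.
  by rewrite /= !size_rcons addn4'.
- exists 2; split => //; exists [:: a; d]; split => //.
  rewrite !gpath_cons gpath_nil eqxx s2_bv s2_av s2_dv (adjC s2_ab) (adjC s2_da) /= !inE.
  by rewrite negb_or (eq_sym b a) ab bd ad.
Qed.

End Step2b.

Section Step2a.
Variables (T : finType) (r x y v : T) (G G' : graph T).
Hypotheses (wf : wf_graph G) (hd : forall z, z \in vs G -> 1 < deg G z)
  (e2 : V2 G :\ r = [set x; y]) (hP : Pprop r G x y) (u : uniq [:: r; x; y])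
  (hr : r \in V2 G) (hx : x \in V2 G) (hy : y \in V2 G) (axy : adj G x y)
  (hv : v \notin vs G) (ev : vs G' = v |: vs G)
  (ee : es G' = es G :|: [set [set v; w] | w in nbh G x]).

Ltac facts :=
  have [rv _] := V2_deg hr; have [xv dx] := V2_deg hx; have [yv dy] := V2_deg hy;
  have [rx ry xy] := uniq3 u;
  have rv' := neq_vs rv hv; have xv' := neq_vs xv hv; have yv' := neq_vs yv hv.

Lemma s3_sv : vs G \subset vs G'.
Proof. by rewrite ev subsetUr. Qed.
Lemma s3_se : es G \subset es G'.
Proof. by rewrite ee subsetUl. Qed.
Lemma s3_vs z : (z \in vs G') = (z == v) || (z \in vs G).
Proof. by rewrite ev !inE. Qed.

Lemma s3_nbv w : w \in nbh G x -> w \in vs G.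
Proof. by rewrite inE => /andP[]. Qed.

Lemma s3_old a b : a \in vs G -> b \in vs G -> adj G' a b = adj G a b.
Proof.
move=> ha hb; rewrite (adjU _ _ ee).
case: (boolP ([set a; b] \in _)) => [/imsetP [w hw /set2_eq [[ea _]|[_ eb]]]|]; last by bsimp.
- by move: ha; rewrite ea (negbTE hv).
- by move: hb; rewrite eb (negbTE hv).
Qed.

Lemma s3_adjv z : adj G' v z = (z \in nbh G x).
Proof.
rewrite (adjU _ _ ee) (adj_nvs _ wf hv) /=.
apply/idP/idP.
- case/andP=> _ /imsetP [w hw /set2_eq [[_ ->]|[ev' _]]] //.
  by move: (s3_nbv hw); rewrite -ev' (negbTE hv).
- move=> hz; rewrite eq_sym (neq_vs (s3_nbv hz) hv) /=.
  exact: imset_f.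
Qed.

Lemma s3_adjx z : adj G' x z = adj G x z.
Proof.
rewrite (adjU _ _ ee).
case: (boolP ([set x; z] \in _)) => [/imsetP [w hw /set2_eq [[ex _]|[ew _]]]|]; last by bsimp.
- by facts; move: xv'; rewrite ex eqxx.
- by move: hw; rewrite -ew inE => /andP[_ /adj_neq]; rewrite eqxx.
Qed.

Lemma s3_wf : wf_graph G'.
Proof.
move=> e; rewrite ee in_setU => /orP[/wf /andP[-> s]|]; first exact: subset_trans s s3_sv.
case/imsetP=> w hw ->; have wv := s3_nbv hw.
rewrite cards2 subUset !sub1set !s3_vs eqxx wv orbT /=.
by rewrite (eq_sym v w) (neq_vs wv hv).
Qed.

Lemma s3_nbhx : nbh G' x = nbh G x.
Proof.
apply/setP=> z; rewrite !inE s3_adjx s3_vs.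
case h: (adj G x z); bsimp => //.
by have /andP[_ ->] := adj_vs wf h; rewrite orbT.
Qed.

Lemma s3_nbhv : nbh G' v = nbh G x.
Proof.
apply/setP=> z; rewrite [in LHS]inE s3_adjv s3_vs.
case h: (z \in nbh G x); bsimp => //.
by rewrite (s3_nbv h) orbT.
Qed.

Lemma s3_degx : deg G' x = 2.
Proof. by rewrite /deg s3_nbhx; facts. Qed.
Lemma s3_degv : deg G' v = 2.
Proof. by rewrite /deg s3_nbhv; facts. Qed.

Lemma s3_vv : v \in vs G'.
Proof. by rewrite s3_vs eqxx. Qed.
Lemma s3_xv : x \in vs G'.
Proof. by facts; rewrite s3_vs xv orbT. Qed.

Lemma s3_yv_adj : adj G' y v.
Proof. by facts; rewrite adj_sym s3_adjv inE yv axy. Qed.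

Lemma s3_mindeg z : z \in vs G' -> 1 < deg G' z.
Proof.
rewrite s3_vs => /orP[/eqP->|hz]; first by rewrite s3_degv.
exact: leq_trans (hd hz) (deg_mono _ s3_sv s3_se).
Qed.

Lemma s3_V2 : V2 G' :\ r = [set x; v].
Proof.
facts; apply: V2_eq; rewrite ?s3_xv ?s3_vv ?s3_degx ?s3_degv //; try by rewrite eq_sym.
move=> z hz zx zv zr; move: hz; rewrite s3_vs (negbTE zv) /= => hz.
have [->|zy] := eqVneq z y.
  have := @deg_grow T G G' y v s3_sv s3_se hv.
  by rewrite in_nbh s3_vv s3_yv_adj dy => /(_ isT); exact: grow_neq2.
have : z \notin V2 G :\ r by rewrite e2 !inE negb_or zx zy.
rewrite !inE zr hz /= => dz.
exact: mono_neq2 dz (hd hz) (deg_mono z s3_sv s3_se).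
Qed.


Lemma s3_A0 : [/\ Up G x y [:: 0; 1], Hit G x y 0 & Cprop r G x y].
Proof. by case: hP => [[[na _]|[_ [h1 h2 _]]] _ hC _]; [move: na; rewrite axy|split=> //; apply: hC]. Qed.

Lemma s3_swap u0 s : gpath G u0 x s -> u0 != x ->
  exists s', [/\ gpath G' u0 v s', size s' = size s & x \notin u0 :: s'].
Proof.
case/lastP: s => [|t w] h ne; first by move: h; rewrite gpath_nil (negbTE ne).
move: h; rewrite gpath_rcons => /and5P[/eqP ew ht hl hxn _]; subst w.
exists (rcons t v); split; last by facts; rewrite nin_rcons_cons xv' hxn.
- have hvs := gpath_vs ht; apply: ext_new s3_sv s3_se ht _ hv s3_vv.
  rewrite adj_sym s3_adjv inE adj_sym hl andbT.
  by apply: hvs; apply: mem_last.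
- by rewrite !size_rcons.
Qed.

Lemma s3_delv u0 w0 s : gpath G u0 w0 s -> gpath (del G' v) u0 w0 s.
Proof. by move=> h; rewrite gpath_del (gpath_mono s3_sv s3_se h) (notin_path h hv). Qed.

Lemma s3_restr u0 w0 t : gpath G' u0 w0 t -> v \notin u0 :: t -> gpath G u0 w0 t.
Proof.
move=> h hvn; have hvs := gpath_vs h.
apply: gpath_restr h _ _; last by move=> a b ha hb; rewrite s3_old.
move=> a ha; have := hvs _ ha; rewrite s3_vs => /orP[/eqP ea|//].
by move: hvn; rewrite -ea ha.
Qed.

Lemma s3_up : Up G' x v [:: 1; 2].
Proof.
have [u0 _ _] := s3_A0.
move=> n [s [hs <-]]; facts.
case: s hs => [|z s] hs; first by move: hs; rewrite gpath_nil (negbTE xv').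
move: hs; rewrite gpath_cons => /and4P[xz nx _ hs].
rewrite s3_adjx in xz.
have zn : z \in nbh G x by rewrite inE xz andbT; case/andP: (adj_vs wf xz).
case/lastP: s hs nx => [|t w] hs nx.
  move: hs; rewrite gpath_nil => /andP[/eqP ez _].
  by move: (s3_nbv zn); rewrite ez (negbTE hv).
move: hs; rewrite gpath_rcons => /and5P[/eqP ew ht hl hvn _]; subst w.
have zn' : last z t \in nbh G x by rewrite -s3_adjv adj_sym.
rewrite /= size_rcons.
have [ez|nz] := eqVneq z (last z t).
  by rewrite -ez in ht; rewrite (gpath_loop ht).
move: nx; rewrite nin_cons nin_rcons => /and3P[xz' _ xt].
have ht' := s3_restr ht hvn.
have xzt : x \notin z :: t by rewrite nin_cons xz' xt.
have yn : y \in nbh G x by rewrite inE yv axy.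
case: (two_elem dx yn zn zn' nz) => e.
- subst z; apply: m01_12'; apply: (Up_rev u0).
  exists (rcons t x); split; last by rewrite size_rcons.
  apply: ext_path ht' _ xzt xv.
  by move: zn'; rewrite inE adj_sym => /andP[].
- apply: m01_12'; apply: u0; exists (z :: t); split => //.
  by rewrite -e; apply: pre_path ht' xz xzt xv.
Qed.

Lemma s3_B : Bprop r G' x v.
Proof.
case: hP => _ [b1 b2 _ _] _ _; facts.
split; try exact: Hit_mono s3_sv s3_se _.
- apply: (Hit_gen0 b1) => s hs; have [s' [h1 h2 _]] := s3_swap hs rx; by exists s'.
- apply: (Hit_gen0 b2) => s hs; have [s' [h1 h2 _]] := s3_swap hs rx; by exists s'.
Qed.

Lemma s3_C : Cprop r G' x v.
Proof.
have [_ _ [c0 c2 _ _]] := s3_A0; facts.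
have {}c0 := Hit_del c0; have {}c2 := Hit_del c2.
split.
- by apply: (Hit_gen0 c0) => s hs; exists s; rewrite s3_delv.
- by apply: (Hit_gen0 c2) => s hs; exists s; rewrite s3_delv.
- apply: (Hit_gen0 c0) => s hs; have [s' [h1 h2 h3]] := s3_swap hs rx.
  by exists s'; rewrite gpath_del h1 h3.
- apply: (Hit_gen0 c2) => s hs; have [s' [h1 h2 h3]] := s3_swap hs rx.
  by exists s'; rewrite gpath_del h1 h3.
Qed.

Lemma s3_inv : Inv r G'.
Proof.
have [_ h0 _] := s3_A0; facts.
apply: (Inv_intro s3_wf s3_mindeg xv' s3_V2).
split; [|exact: s3_B|by move=> _; exact: s3_C|by right; exact: s3_C].
left; split; first by rewrite s3_adjx (adj_nvs2 _ wf hv).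
split; [by rewrite s3_nbhx s3_nbhv|exact: s3_up| |].
- apply: (Hit_gen' (m := 1) _ h0) => // s hs; exists (rcons s v); split.
    exact: ext_new s3_sv s3_se hs s3_yv_adj hv s3_vv.
  by rewrite size_rcons addn1.
- exists 2; split => //; exists [:: y; v]; split => //.
  rewrite !gpath_cons gpath_nil eqxx s3_vv s3_xv s3_adjx axy s3_yv_adj /= !inE.
  by rewrite negb_or xy xv' yv' s3_vs yv orbT.
Qed.

End Step2a.

Section K23.
Variables (T : finType) (r a1 a2 b1 b2 b3 : T) (G : graph T).
Hypotheses (un : uniq [:: a1; a2; b1; b2; b3]) (hv : vs G = [set a1; a2; b1; b2; b3])
  (he : es G = [set [set a1; b1]; [set a1; b2]; [set a1; b3];
                    [set a2; b1]; [set a2; b2]; [set a2; b3]]).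

Ltac facts := have [[a12 a1b1 a1b2 a1b3] [a2b1 a2b2 a2b3] b12 b13 b23] := uniq5 un.

Lemma k_vs z : (z \in vs G) = [|| z == a1, z == a2, z == b1, z == b2 | z == b3].
Proof. by rewrite hv !inE !orbA. Qed.

Lemma k_adj u w : adj G u w -> (u \in [set a1; a2]) != (w \in [set a1; a2]).
Proof.
move=> /andP[_]; rewrite he !inE !set2_eqE; facts.
by repeat case/orP; case/andP => /eqP -> /eqP ->; rewrite ?eqxx; eqF; bsimp.
Qed.

Lemma k_adjAB i j : i \in [set a1; a2] -> j \in [set b1; b2; b3] -> adj G i j.
Proof.
facts; rewrite !inE => /orP[]/eqP-> /orP[/orP[]|]/eqP->; rewrite /adj he !inE !set2_eqE; eqF; by bsimp.
Qed.

Lemma k_BnA j : j \in [set b1; b2; b3] -> [/\ j != a1, j != a2, j \notin [set a1; a2] & j \in vs G].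
Proof.
by facts; rewrite !inE k_vs => /orP[/orP[]|]/eqP->; eqF; bsimp; rewrite ?eqxx ?orbT.
Qed.

Lemma k_B z : z \in vs G -> z \notin [set a1; a2] -> z \in [set b1; b2; b3].
Proof. by rewrite k_vs !inE !negb_or => /orP[/eqP->|/orP[/eqP->|/orP[/eqP->|/orP[/eqP->|/eqP->]]]]; rewrite ?eqxx /= ?andbF ?orbT. Qed.

Lemma k_A i : i \in [set a1; a2] -> i \in vs G.
Proof. by rewrite k_vs !inE => /orP[]/eqP->; rewrite eqxx ?orbT. Qed.

Lemma k_nbhB j : j \in [set b1; b2; b3] -> nbh G j = [set a1; a2].
Proof.
move=> hj; have [_ _ jA _] := k_BnA hj.
apply: nbh2; rewrite ?k_A ?inE ?eqxx ?orbT //.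
- move=> w /k_adj; rewrite (negbTE jA); case hw: (w \in [set a1; a2]) => // _; move: hw; rewrite !inE => /orP[]/eqP->; by [left|right].
- by rewrite adj_sym; apply: k_adjAB hj; rewrite !inE eqxx.
- by rewrite adj_sym; apply: k_adjAB hj; rewrite !inE eqxx orbT.
Qed.

Lemma k_degB j : j \in [set b1; b2; b3] -> deg G j = 2.
Proof. by move=> hj; facts; apply: deg_eq2 a12 (k_nbhB hj). Qed.

Lemma k_degA i : i \in [set a1; a2] -> 3 <= deg G i.
Proof.
move=> hi; facts.
have h1 : b1 \in [set b1; b2; b3] by rewrite !inE eqxx.
have h2 : b2 \in [set b1; b2; b3] by rewrite !inE eqxx ?orbT.
have h3 : b3 \in [set b1; b2; b3] by rewrite !inE eqxx ?orbT.
have [_ _ _ v1] := k_BnA h1; have [_ _ _ v2] := k_BnA h2; have [_ _ _ v3] := k_BnA h3.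
apply: (@deg_ge3 _ _ _ b1 b2 b3); rewrite ?in_nbh ?v1 ?v2 ?v3 ?k_adjAB //.
by rewrite /= !inE; eqF.
Qed.

Lemma k_V2 : V2 G = [set b1; b2; b3].
Proof.
apply/setP=> z; rewrite [in LHS]inE.
case hA: (z \in [set a1; a2]).
- have := k_degA hA; case: (deg G z) => [|[|[|n]]] //= _; rewrite andbF.
  by apply/esym/negP=> /k_BnA [_ _ h _]; rewrite hA in h.
- case hz: (z \in vs G) => /=.
    by rewrite (k_B hz) ?hA // k_degB ?(k_B hz) ?hA.
  by apply/esym/negP=> /k_BnA [_ _ _ h]; rewrite h in hz.
Qed.

Lemma k_wf : wf_graph G.
Proof.
facts; move=> e; rewrite he !inE => /orP[/orP[/orP[/orP[/orP[]|]|]|]|] /eqP->;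
  rewrite cards2 subUset !sub1set !k_vs; eqF; by bsimp.
Qed.

Lemma k_mindeg z : z \in vs G -> 1 < deg G z.
Proof.
move=> hz; case hA: (z \in [set a1; a2]); first by have := k_degA hA; case: (deg G z) => [|[|]].
by rewrite k_degB // k_B ?hA.
Qed.

Lemma k_parity u s : path (adj G) u s ->
  (last u s \in [set a1; a2]) = (u \in [set a1; a2]) (+) odd (size s).
Proof.
elim: s u => [|z s IH] u /=; first by rewrite addbF.
case/andP=> /k_adj h /IH ->.
by move: h; case: (u \in _); case: (z \in _); case: (odd _).
Qed.

Lemma k_up x y : x \in [set b1; b2; b3] -> y \in [set b1; b2; b3] -> x != y -> Up G x y [:: 1; 2].
Proof.
move=> hx hy xy n [s [hs <-]].
have [_ _ xA _] := k_BnA hx; have [_ _ yA _] := k_BnA hy.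
have /and4P[p /eqP l un' al] := hs.
have par := k_parity p; rewrite l (negbTE xA) (negbTE yA) /= in par.
apply: even_small; first by rewrite -par.
  by case: (s) l => //= el; rewrite el eqxx in xy.
have : size (x :: s) <= size [:: a1; a2; b1; b2; b3].
  have sub : {subset x :: s <= [:: a1; a2; b1; b2; b3]}.
    by move=> z hz; have := gpath_vs hs hz; rewrite k_vs !inE.
  exact: uniq_leq_size un' sub.
by [].
Qed.

Lemma k_path2 p q : p \in [set b1; b2; b3] -> q \in [set b1; b2; b3] -> p != q -> Lset G p q 2.
Proof.
move=> hp hq pq; have [p1 p2 _ pv] := k_BnA hp; have [q1 q2 _ qv] := k_BnA hq.
have hA : a1 \in [set a1; a2] by rewrite !inE eqxx.
exists [:: a1; q]; split => //.
rewrite !gpath_cons gpath_nil eqxx pv qv (k_A hA) (k_adjAB hA hq) adj_sym (k_adjAB hA hp) /= !inE.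
by rewrite negb_or pq p1 eq_sym q1.
Qed.

Lemma k_path4 p q o : p \in [set b1; b2; b3] -> q \in [set b1; b2; b3] -> o \in [set b1; b2; b3] ->
  uniq [:: p; q; o] -> Lset G p q 4.
Proof.
move=> hp hq ho upq; have [pq po qo] := uniq3 upq.
have [p1 p2 _ pv] := k_BnA hp; have [q1 q2 _ qv] := k_BnA hq; have [o1 o2 _ ov] := k_BnA ho.
have h1 : a1 \in [set a1; a2] by rewrite !inE eqxx.
have h2 : a2 \in [set a1; a2] by rewrite !inE eqxx orbT.
have a12 : a1 != a2 by have [[]] := uniq5 un.
exists [:: a1; o; a2; q]; split => //.
rewrite !gpath_cons gpath_nil eqxx pv qv ov (k_A h1) (k_A h2).
have e1 : adj G p a1 by rewrite adj_sym k_adjAB.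
have e2 : adj G a1 o := k_adjAB h1 ho.
have e3 : adj G o a2 by rewrite adj_sym k_adjAB.
have e4 : adj G a2 q := k_adjAB h2 hq.
rewrite e1 e2 e3 e4 /= !inE; eqF; by bsimp.
Qed.


Lemma k_inv : r \in V2 G -> Inv r G.
Proof.
move=> hr; have hB := hr; rewrite k_V2 in hB.
have hK : isK23 G by exists a1, a2, b1, b2, b3.
have [_ _ b12 b13 b23] := uniq5 un.
split; [exact: k_wf|exact: k_mindeg| |].
- rewrite k_V2; have := cardsD1 r [set b1; b2; b3]; rewrite hB card3 /=; last by rewrite /= !inE negb_or b12 b13 b23.
  by case.
- move=> x y xy e.
  have hx : x \in V2 G :\ r by rewrite e !inE eqxx.
  have hy : y \in V2 G :\ r by rewrite e !inE eqxx orbT.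
  move: hx hy; rewrite !in_setD1 k_V2 => /andP[xr hxB] /andP[yr hyB].
  have [_ _ xA _] := k_BnA hxB; have [_ _ yA _] := k_BnA hyB.
  have h2 : forall p q, p \in [set b1; b2; b3] -> q \in [set b1; b2; b3] -> p != q -> Hit G p q 2.
    by move=> p q hp hq pq; exists 2; split => //; apply: k_path2.
  have h1 : forall p q o, p \in [set b1; b2; b3] -> q \in [set b1; b2; b3] ->
      o \in [set b1; b2; b3] -> uniq [:: p; q; o] -> Hit G p q 1.
    by move=> p q o hp hq ho upq; exists 4; split => //; apply: k_path4 hp hq ho upq.
  have nxy : ~~ adj G x y.
    by apply/negP=> /k_adj; rewrite (negbTE xA) (negbTE yA).
  split.
  + left; split => //; split; first by rewrite !k_nbhB.
    * exact: k_up.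
    * by apply: (h1 _ _ r) => //=; rewrite !inE; eqF.
    * exact: h2.
  + split.
    * by apply: (h1 _ _ y) => //=; rewrite !inE; eqF.
    * by apply: h2 => //; rewrite eq_sym.
    * by apply: (h1 _ _ x) => //=; rewrite !inE; eqF.
    * by apply: h2 => //; rewrite eq_sym.
  + by move=> h; rewrite h in nxy.
  + by left.
Qed.

End K23.

Lemma K23_inv (T : finType) (r : T) G : isK23 G -> r \in V2 G -> Inv r G.
Proof. by case=> [a1 [a2 [b1 [b2 [b3 [un hv he]]]]]]; apply: k_inv un hv he. Qed.




Lemma step1_inv (T : finType) (r x y p q : T) (G G' : graph T) :
  wf_graph G -> (forall z, z \in vs G -> 1 < deg G z) -> V2 G :\ r = [set x; y] ->
  Pprop r G x y -> uniq [:: r; x; y] -> r \in V2 G -> x \in V2 G -> y \in V2 G ->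
  ~~ adj G x y -> uniq [:: p; q] -> p \notin vs G -> q \notin vs G ->
  vs G' = vs G :|: [set p; q] ->
  es G' = es G :|: [set [set x; p]; [set p; q]; [set q; y]] -> Inv r G'.
Proof. by move=> *; eapply s1_inv; eassumption. Qed.

Lemma step2a_inv (T : finType) (r x y v : T) (G G' : graph T) :
  wf_graph G -> (forall z, z \in vs G -> 1 < deg G z) -> V2 G :\ r = [set x; y] ->
  Pprop r G x y -> uniq [:: r; x; y] -> r \in V2 G -> x \in V2 G -> y \in V2 G ->
  adj G x y -> v \notin vs G -> vs G' = v |: vs G ->
  es G' = es G :|: [set [set v; u] | u in nbh G x] -> Inv r G'.
Proof. by move=> *; eapply s3_inv; eassumption. Qed.

Lemma step2b_inv (T : finType) (r x y a b c d : T) (G G' : graph T) :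
  wf_graph G -> (forall z, z \in vs G -> 1 < deg G z) -> V2 G :\ r = [set x; y] ->
  Pprop r G x y -> uniq [:: r; x; y] -> r \in V2 G -> x \in V2 G -> y \in V2 G ->
  adj G x y -> uniq [:: a; b; c; d] ->
  [&& a \notin vs G, b \notin vs G, c \notin vs G & d \notin vs G] ->
  vs G' = vs G :|: [set a; b; c; d] ->
  es G' = es G :|: [set [set a; b]; [set b; c]; [set c; d]; [set d; a];
                        [set a; x]; [set c; y]] -> Inv r G'.
Proof. by move=> *; eapply s2_inv; eassumption. Qed.

Lemma step_inv (T : finType) (r x y : T) (G G' : graph T) :
  Inv r G -> ext_step r G x y G' -> Inv r G'.
Proof.
case=> wf hd c2 hP [u hr hx hy hcase].
have e : V2 G :\ r = [set x; y].
  apply/esym/eqP; rewrite eqEcard c2 cards2.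
  move: u; rewrite /= !inE !negb_or => /and3P[/andP[rx ry] xy _].
  rewrite xy leqnn andbT subUset !sub1set !in_setD1 hx hy !andbT.
  by rewrite (eq_sym x) (eq_sym y) rx ry.
have xy : x != y by move: u; rewrite /= !inE !negb_or => /and3P[_ -> _].
have P1 := hP _ _ xy e.
case: hcase => [[na [p [q [upq hp hq ev ee]]]]|[a [[v [w [hv hw ev ee]]]|[a' [b [c [d [uu hn ev ee]]]]]]]].
- exact: step1_inv wf hd e P1 u hr hx hy na upq hp hq ev ee.
- move: hw; rewrite !inE => /orP[]/eqP ew; subst w.
  + exact: step2a_inv wf hd e P1 u hr hx hy a hv ev ee.
  + apply: (@step2a_inv T r y x v G G') => //.
    * by rewrite setUC.
    * exact: Pprop_sym.
    * by move: u; rewrite /= !inE !negb_or => /and3P[/andP[-> ->] _ _]; rewrite eq_sym xy.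
    * by rewrite adj_sym.
- exact: step2b_inv wf hd e P1 u hr hx hy a uu hn ev ee.
Qed.

Lemma inv_exc (T : finType) (r : T) G : exc r G -> Inv r G.
Proof.
elim=> [G0 hK hr|G0 x y G1 _ IH hs]; first exact: K23_inv.
exact: step_inv IH hs.
Qed.

Theorem lemma3p2 (T : finType) (G : graph T) (r x y : T) :
  exceptional G r ->
  x != y -> V2 G :\ r = [set x; y] ->
  ( (~~ adj G x y /\ nbh G x = nbh G y /\
       equiv_mod (Lset G x y) (natset [:: 1; 2]) 3)
    \/
    (adj G x y /\ equiv_mod (Lset G x y) (natset [:: 0; 1]) 3) )
  /\
  (~ isK23 G ->
     subset_mod (natset [:: 0; 2]) (Lset (del G y) r x) 3 /\
     subset_mod (natset [:: 0; 2]) (Lset (del G x) r y) 3).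
Proof.
move=> [hexc _] xy e.
have [_ _ _ hP] := inv_exc hexc.
have [hA _ _ hK] := hP _ _ xy e.
have hitS (H : graph T) u w (k : nat) : Hit H u w k -> exists b, Lset H u w b /\ k = b %[mod 3].
  by move=> [n [hn hk]]; exists n; split=> //; rewrite -hk modn_mod.
have upS (H : graph T) u w S : Up H u w S -> subset_mod (Lset H u w) (natset S) 3.
  by move=> h n hn; exists (n %% 3); split; [exact: h | rewrite modn_mod].
split.
- case: hA => [[na [en hu h1 h2]]|[a [hu h0 h1]]].
  + left; do 2 split => //; split; first exact: upS.
    by move=> k; rewrite /natset !inE => /orP[]/eqP->; apply: hitS.
  + right; split => //; split; first exact: upS.
    by move=> k; rewrite /natset !inE => /orP[]/eqP->; apply: hitS.
- move=> nK; case: hK => // -[c1 c2 c3 c4].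
  by split=> k; rewrite /natset !inE => /orP[]/eqP->; apply: hitS.
Qed.
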